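(* The code $\mathcal C_3(\mathbb D_d)$ is contained in the ternary fourth-order (extended) generalized Reed–Muller code $\mathcal R_3(4,2m)$.
   Context: Let $m\ge 2$ be an integer. For $s\in\{m,2m\}$ let $\mathrm{Tr}_s:\mathbb F_{3^s}\to\mathbb F_3$ denote the absolute trace. Vectors in $\mathbb F_3^{3^{2m}}$ are indexed by $\mathbb F_{3^{2m}}$, and a function $f:\mathbb F_{3^{2m}}\to\mathbb F_3$ is identified with $(f(t))_{t\in\mathbb F_{3^{2m}}}$. Let $\mathcal C(2m,3)=\{(\mathrm{Tr}_{2m}(at^{3^m+1}+bt)+h)_{t\in\mathbb F_{3^{2m}}}: a\in\mathbb F_{3^m}, b\in\mathbb F_{3^{2m}}, h\in\mathbb F_3\}$, let $d$ be its minimum nonzero Hamming weight, let $\mathbb D_d$ be the incidence structure on $\mathbb F_{3^{2m}}$ whose blocks are the supports of the weight-$d$ codewords, and let $\mathcal C_3(\mathbb D_d)$ be the $\mathbb F_3$-span of the incidence vectors of the blocks. Fix an $\mathbb F_3$-basis of $\mathbb F_{3^{2m}}$, identifying $\mathbb F_{3^{2m}}$ with $\mathbb F_3^{2m}$; $\mathcal R_3(r,2m)$ denotes the set of functions $\mathbb F_3^{2m}\to\mathbb F_3$ given by polynomials over $\mathbb F_3$ in $2m$ variables of total degree at most $r$ (equivalently, the extension by an overall parity check of the punctured generalized Reed–Muller code of order $r$ over $\mathbb F_3$ of length $3^{2m}-1$). *)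

(* Defs.v *)
From HB Require Import structures.
From mathcomp Require Import all_boot all_order all_algebra all_field.
From mathcomp Require Import mpoly.
Set Implicit Arguments. Unset Strict Implicit. Unset Printing Implicit Defensive.
Import GRing.Theory.
Local Open Scope ring_scope.

Section Defs.
Variable L : finFieldType.

Definition trace3 (s : nat) (x : L) : L := \sum_(i < s) x ^+ (3 ^ i).

(* the natural embedding F_3 -> L (meaningful when char L = 3) *)
Definition F3toL (c : 'F_3) : L := (nat_of_ord c)%:R.

(* the inverse of the embedding on the prime subfield (0 elsewhere) *)
Definition LtoF3 (x : L) : 'F_3 :=
  odflt 0 [pick c : 'F_3 | F3toL c == x].

Local Notation vecL := {ffun L -> 'F_3}.

Definition codeC (m : nat) : {set vecL} :=
  [set c : vecL | [exists a : L, exists b : L, exists h : 'F_3,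
     (a ^+ (3 ^ m) == a) &&
     [forall t : L, c t == LtoF3 (trace3 (2 * m) (a * t ^+ (3 ^ m + 1) + b * t)) + h]]].

Definition wt (c : vecL) : nat := #|[set t | c t != 0]|.

Definition supp (c : vecL) : {set L} := [set t | c t != 0].

Definition minwt_codeword (C : {set vecL}) (c : vecL) : bool :=
  [&& c \in C, c != 0 & [forall c' in C, (c' != 0) ==> (wt c <= wt c')%N]].

Definition blocks (m : nat) : {set {set L}} :=
  [set supp c | c in [set c | minwt_codeword (codeC m) c]].

Definition incvec (B : {set L}) : vecL := [ffun t => if t \in B then 1 else 0].

Definition in_span (S : {set vecL}) (v : vecL) : Prop :=
  exists lam : vecL -> 'F_3, forall t : L, v t = \sum_(w in S) lam w * w t.

Definition designCode (m : nat) : {set vecL} := [set incvec B | B in blocks m].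

Definition is_F3basis (n : nat) (b : 'I_n -> L) : Prop :=
  forall x y : 'I_n -> 'F_3,
    \sum_(i < n) F3toL (x i) * b i = \sum_(i < n) F3toL (y i) * b i -> x = y.

(* R_3(r,n) in coordinates w.r.t. the basis b: functions given by a
   polynomial over F_3 in n variables of total degree <= r *)
Definition inRM (r n : nat) (b : 'I_n -> L) (v : vecL) : Prop :=
  exists P : {mpoly 'F_3[n]}, (msize P <= r.+1)%N /\
    forall x : 'I_n -> 'F_3, v (\sum_(i < n) F3toL (x i) * b i) = P.@[x].

End Defs.

(* Main.v *)
Require Import Defs.
From HB Require Import structures.
From mathcomp Require Import all_boot all_order all_algebra all_field.
From mathcomp Require Import mpoly.
From mathcomp Require Import zify.
Set Implicit Arguments. Unset Strict Implicit. Unset Printing Implicit Defensive.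
Import GRing.Theory.
Local Open Scope ring_scope.

Definition RMf (n r : nat) (f : ('I_n -> 'F_3) -> 'F_3) : Prop :=
  exists P : {mpoly 'F_3[n]}, (msize P <= r.+1)%N /\ forall x, f x = P.@[x].

Lemma RM_ext n r f g : (forall x, f x = g x) -> @RMf n r f -> RMf r g.
Proof. move=> E [P [HP HE]]; exists P; split=> // x; by rewrite -E. Qed.

Lemma RM_mono n r s f : (r <= s)%N -> @RMf n r f -> RMf s f.
Proof. move=> rs [P [HP HE]]; exists P; split=> //; exact: leq_trans HP _. Qed.

Lemma RM_const n c : @RMf n 0 (fun _ => c).
Proof. exists c%:MP; split; last by move=> x; rewrite mevalC.
by rewrite msizeC; case: (c != 0). Qed.

Lemma RM_var n i : @RMf n 1 (fun x => x i).
Proof. exists 'X_i; split; last by move=> x; rewrite mevalXU.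
by rewrite msizeX mdeg1. Qed.

Lemma RM_add n r f g : @RMf n r f -> RMf r g -> RMf r (fun x => f x + g x).
Proof.
move=> [P [HP EP]] [Q [HQ EQ]]; exists (P + Q); split.
  by apply: leq_trans (msizeD_le _ _) _; rewrite geq_max HP HQ.
by move=> x; rewrite mevalD EP EQ.
Qed.

Lemma RM_mul n r s f g : @RMf n r f -> RMf s g -> RMf (r + s) (fun x => f x * g x).
Proof.
move=> [P [HP EP]] [Q [HQ EQ]]; exists (P * Q); split; last first.
  by move=> x; rewrite mevalM EP EQ.
have [->|nP] := eqVneq P 0; first by rewrite mul0r msize0.
have [->|nQ] := eqVneq Q 0; first by rewrite mulr0 msize0.
rewrite msizeM //.
have h1 : (0 < msize P)%N by rewrite lt0n msize_poly_eq0.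
have h2 : (0 < msize Q)%N by rewrite lt0n msize_poly_eq0.
move: HP HQ h1 h2; case: (msize P) => // p; case: (msize Q) => // q /= HP HQ _ _.
move: HP HQ; rewrite !ltnS => HP HQ; lia.
Qed.

Lemma RM_sum n r (I : Type) (s : seq I) (F : I -> ('I_n -> 'F_3) -> 'F_3) :
  (forall i, RMf r (F i)) -> RMf r (fun x => \sum_(i <- s) F i x).
Proof.
move=> H; elim: s => [|i s IH].
  apply: RM_ext (RM_mono (leq0n r) (RM_const n 0)) => x; by rewrite big_nil.
by apply: RM_ext (RM_add (H i) IH) => x; rewrite big_cons.
Qed.

Section Field.
Variable L : finFieldType.
Hypothesis h3 : 3%N \in [pchar L].

Lemma F3toLD (c d : 'F_3) : F3toL L (c + d) = F3toL L c + F3toL L d.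
Proof. by rewrite /F3toL -natrD -(GRing.natr_mod_pchar h3 (_ + _)). Qed.

Lemma F3toLM (c d : 'F_3) : F3toL L (c * d) = F3toL L c * F3toL L d.
Proof. by rewrite /F3toL -natrM -(GRing.natr_mod_pchar h3 (_ * _)). Qed.

Lemma F3toL0 : F3toL L 0 = 0. Proof. by []. Qed.

Lemma F3toL_sum (I : Type) (s : seq I) (F : I -> 'F_3) :
  F3toL L (\sum_(i <- s) F i) = \sum_(i <- s) F3toL L (F i).
Proof. exact: (big_morph _ F3toLD F3toL0). Qed.

Lemma F3toL_inj : injective (F3toL L).
Proof.
have key : forall c d : 'F_3, (nat_of_ord c <= nat_of_ord d)%N -> F3toL L c = F3toL L d -> c = d.
  move=> c d le E; apply: val_inj => /=.
  have : (3 %| d - c)%N by rewrite (dvdn_pcharf h3) natrB // -/(F3toL L d) -/(F3toL L c) E subrr.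
  case/dvdnP => k hk; have hd : (nat_of_ord d < 3)%N := ltn_ord d; lia.
move=> c d E; case: (leqP (nat_of_ord c) (nat_of_ord d)) => le.
  exact: key.
by apply/esym/key => //; apply: ltnW.
Qed.

Lemma LtoF3K c : LtoF3 (F3toL L c) = c.
Proof.
rewrite /LtoF3; case: pickP => [c' /eqP H | H] /=; first exact: F3toL_inj.
by move: (H c); rewrite eqxx.
Qed.

Lemma pnat3 k : [pchar L].-nat (3 ^ k)%N.
Proof. by rewrite (eq_pnat _ (pcharf_eq h3)) pnatX pnat_id ?orTb. Qed.

Lemma frobD k (x y : L) : (x + y) ^+ (3 ^ k) = x ^+ (3 ^ k) + y ^+ (3 ^ k).
Proof. exact: exprDn_pchar (pnat3 k). Qed.

Lemma frob_nat k c : F3toL L c ^+ (3 ^ k) = F3toL L c.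
Proof.
elim: k => [|k IH]; first by rewrite expn0 expr1.
by rewrite expnSr exprM IH /F3toL -(pFrobenius_autE h3) pFrobenius_aut_nat.
Qed.

Lemma frob_sum k (I : Type) (s : seq I) (F : I -> L) :
  (\sum_(i <- s) F i) ^+ (3 ^ k) = \sum_(i <- s) F i ^+ (3 ^ k).
Proof.
apply: (big_morph (fun x : L => x ^+ (3 ^ k))) => [x y|]; first exact: frobD.
by rewrite expr0n expn_eq0.
Qed.

Lemma traceD s (x y : L) : trace3 s (x + y) = trace3 s x + trace3 s y.
Proof. by rewrite /trace3 -big_split; apply: eq_bigr => i _; exact: frobD. Qed.

Lemma trace0 s : trace3 s (0 : L) = 0.
Proof. by rewrite /trace3 big1 // => i _; rewrite expr0n expn_eq0. Qed.

Lemma traceZ s c (x : L) : trace3 s (F3toL L c * x) = F3toL L c * trace3 s x.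
Proof. by rewrite /trace3 mulr_sumr; apply: eq_bigr => i _; rewrite exprMn frob_nat. Qed.

Lemma trace_sum n (I : Type) (r : seq I) (F : I -> L) :
  trace3 n (\sum_(i <- r) F i) = \sum_(i <- r) trace3 n (F i).
Proof. exact: (big_morph _ (traceD n) (trace0 n)). Qed.

Lemma cube_prime (z : L) : z ^+ 3 = z -> exists c, z = F3toL L c.
Proof.
move=> H.
have : z * (z - 1) * (z + 1) == 0.
  by rewrite -mulrA -subr_sqr expr1n mulrBr mulr1 -exprS H subrr.
rewrite !mulf_eq0 subr_eq0 addr_eq0 => /orP [/orP [] |] /eqP ->.
- by exists 0.
- by exists 1.
- exists (2%:R); rewrite /F3toL /=; apply/eqP; rewrite eq_sym -subr_eq0 opprK.
  by rewrite -(natrD L 2 1) (pcharf0 h3).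
Qed.

Variable m : nat.
Hypothesis hcard : #|L| = (3 ^ (2 * m))%N.

Lemma trace_prime (y : L) : exists c, trace3 (2 * m) y = F3toL L c.
Proof.
apply: cube_prime.
rewrite -[3%N]expn1 /trace3 frob_sum.
have E : \sum_(i < (2 * m).+1) y ^+ (3 ^ i) = \sum_(i < (2 * m).+1) y ^+ (3 ^ i) by [].
move: E; rewrite {1}big_ord_recr big_ord_recl /= -hcard expf_card expn0 expr1.
move=> E'.
have -> : \sum_(i < 2 * m) y ^+ (3 ^ i) ^+ (3 ^ 1) = \sum_(i < 2 * m) y ^+ (3 ^ bump 0 i).
  by apply: eq_bigr => i _; rewrite -exprM expn1 -expnSr.
by apply/(addrI y); rewrite -E' addrC.
Qed.

Lemma traceE (y : L) : trace3 (2 * m) y = F3toL L (LtoF3 (trace3 (2 * m) y)).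
Proof. by have [c ->] := trace_prime y; rewrite LtoF3K. Qed.


Definition Lin (n r : nat) (g : ('I_n -> 'F_3) -> L) : Prop :=
  exists (I : finType) (h : I -> ('I_n -> 'F_3) -> 'F_3) (w : I -> L),
    (forall j, RMf r (h j)) /\ forall x, g x = \sum_j F3toL L (h j x) * w j.

Lemma Lin_ext n r f g : (forall x, f x = g x) -> @Lin n r f -> Lin r g.
Proof. move=> E [I [h [w [H1 H2]]]]; exists I, h, w; split=> // x; by rewrite -E. Qed.

Lemma Lin_mono n r s f : (r <= s)%N -> @Lin n r f -> Lin s f.
Proof. move=> rs [I [h [w [H1 H2]]]]; exists I, h, w; split=> // j; exact: RM_mono (H1 j). Qed.

Lemma Lin_pt n (b : 'I_n -> L) : Lin 1 (fun x => \sum_i F3toL L (x i) * b i).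
Proof. by exists ('I_n), (fun i x => x i), b; split=> // i; exact: RM_var. Qed.

Lemma Lin_scale n r a g : @Lin n r g -> Lin r (fun x => a * g x).
Proof.
move=> [I [h [w [H1 H2]]]]; exists I, h, (fun j => a * w j); split=> // x.
by rewrite H2 mulr_sumr; apply: eq_bigr => j _; rewrite mulrCA.
Qed.

Lemma Lin_frob n r k g : @Lin n r g -> Lin r (fun x => g x ^+ (3 ^ k)).
Proof.
move=> [I [h [w [H1 H2]]]]; exists I, h, (fun j => w j ^+ (3 ^ k)); split=> // x.
by rewrite H2 frob_sum; apply: eq_bigr => j _; rewrite exprMn frob_nat.
Qed.

Lemma Lin_add n r g1 g2 : @Lin n r g1 -> Lin r g2 -> Lin r (fun x => g1 x + g2 x).
Proof.
move=> [I1 [h1 [w1 [H1 E1]]]] [I2 [h2 [w2 [H2 E2]]]].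
exists (I1 + I2)%type.
exists (fun p => match p with inl i => h1 i | inr j => h2 j end).
exists (fun p => match p with inl i => w1 i | inr j => w2 j end).
split; first by case.
by move=> x; rewrite big_sumType E1 E2.
Qed.

Lemma Lin_mul n r s g1 g2 : @Lin n r g1 -> Lin s g2 -> Lin (r + s) (fun x => g1 x * g2 x).
Proof.
move=> [I1 [h1 [w1 [H1 E1]]]] [I2 [h2 [w2 [H2 E2]]]].
exists (I1 * I2)%type.
exists (fun p x => h1 p.1 x * h2 p.2 x).
exists (fun p => w1 p.1 * w2 p.2).
split; first by move=> p; exact: RM_mul.
move=> x; rewrite E1 E2 mulr_suml -(pair_bigA _ (fun i j => F3toL L (h1 i x * h2 j x) * (w1 i * w2 j))) /=; apply: eq_bigr => i _.
rewrite mulr_sumr; apply: eq_bigr => j _.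
by rewrite F3toLM mulrACA.
Qed.

End Field.

Lemma Lin_trace (L : finFieldType) (h3 : 3%N \in [pchar L]) (m : nat)
  (hcard : #|L| = (3 ^ (2 * m))%N) n r g :
  @Lin L n r g -> RMf r (fun x => LtoF3 (trace3 (2 * m) (g x))).
Proof.
move=> [I [h [w [H1 H2]]]].
pose c j := LtoF3 (trace3 (2 * m) (w j)).
have R : RMf r (fun x => \sum_(j <- index_enum I) h j x * c j).
  apply: RM_sum => j; have := RM_mul (H1 j) (RM_const n (c j)); rewrite addn0; exact.
apply: RM_ext R => x.
rewrite H2 trace_sum; last exact: h3.
have -> : \sum_i trace3 (2 * m) (F3toL L (h i x) * w i) = F3toL L (\sum_j h j x * c j).
  rewrite (F3toL_sum h3); apply: eq_bigr => j _.
  by rewrite (traceZ h3) (traceE h3 hcard) (F3toLM h3).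
by rewrite (LtoF3K h3).
Qed.

Lemma sqF3 (z : 'F_3) : (if z != 0 then 1 else 0) = z * z.
Proof. case: z => [[|[|[|k]]] Hk] //; by apply/val_inj. Qed.

Lemma code_RM (L : finFieldType) (h3 : 3%N \in [pchar L]) (m : nat)
  (hcard : #|L| = (3 ^ (2 * m))%N) (b : 'I_(2 * m) -> L) (c : {ffun L -> 'F_3}) :
  c \in codeC L m ->
  RMf 4 (fun x => incvec (supp c) (\sum_(i < 2 * m) F3toL L (x i) * b i)).
Proof.
rewrite inE => /existsP [a /existsP [bb /existsP [h /andP [_ /forallP H]]]].
set pt := fun x : 'I_(2 * m) -> 'F_3 => \sum_(i < 2 * m) F3toL L (x i) * b i.
have G : Lin 2 (fun x => a * pt x ^+ (3 ^ m + 1) + bb * pt x).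
  apply: Lin_add.
    apply: Lin_scale; apply: Lin_ext (Lin_mul h3 (Lin_frob h3 m (Lin_pt b)) (Lin_pt b)) => x.
    by rewrite exprD expr1.
  by apply: (Lin_mono (r := 1)) => //; apply: Lin_scale; exact: Lin_pt.
have Hc : RMf 2 (fun x => c (pt x)).
  apply: RM_ext (RM_add (Lin_trace h3 hcard G) (RM_mono (leq0n 2) (RM_const _ h))) => x.
  by rewrite (eqP (H (pt x))).
apply: RM_ext (RM_mul Hc Hc) => x.
by rewrite ffunE inE sqF3.
Qed.

Theorem mainTheorem3 (m : nat) (L : finFieldType)
    (hm : (2 <= m)%N) (hchar : 3%N \in [pchar L]) (hcard : #|L| = (3 ^ (2 * m))%N)
    (b : 'I_(2 * m) -> L) (hb : is_F3basis b) (v : {ffun L -> 'F_3}) :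
  in_span (designCode L m) v -> inRM 4 b v.
Proof.
move=> [lam Hv].
suff : RMf 4 (fun x => v (\sum_(i < 2 * m) F3toL L (x i) * b i)) by [].
pose F w (x : 'I_(2 * m) -> 'F_3) := if w \in designCode L m
  then lam w * w (\sum_(i < 2 * m) F3toL L (x i) * b i) else 0.
have HF : forall w, RMf 4 (F w).
  move=> w; rewrite /F; case: (boolP (w \in designCode L m)) => hw.
    case/imsetP: hw => B /imsetP [c hc ->] ->.
    move: hc; rewrite inE => /andP [hc _].
    have := RM_mul (RM_const _ (lam (incvec (supp c)))) (code_RM hchar hcard b hc).
    by rewrite add0n.
  exact: RM_mono (leq0n 4) (RM_const _ 0).
apply: RM_ext (RM_sum (index_enum _) HF) => x.
by rewrite Hv [RHS]big_mkcond.
Qed.
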